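(* Let $\Gamma=(V,m,\tau)$ be a weak $W$-graph and let $A\subseteq\Delta$. The following are equivalent: (1) there is some $v\in V$ with $\tau(v)=A$; (2) the operator $Q(\Delta\setminus A)R(A)$ is nonzero on $\mathbb{C}V$; (3) the trace of $Q(\Delta\setminus A)R(A)$ on $\mathbb{C}V$ is nonzero; (4) the trace of $R(A)Q(\Delta\setminus A)$ on $\mathbb{C}V$ is nonzero.
   Context: $W$ is a Weyl group with a fixed set $\Delta$ of simple roots; for a root $\alpha$, $s_\alpha$ is the reflection in the hyperplane orthogonal to $\alpha$, and $\operatorname{sgn}$ is the sign character of $W$. A weak $W$-graph is a triple $\Gamma=(V,m,\tau)$ where $V$ is a finite set, $m:V\times V\to\mathbb{C}$ is a map, and $\tau$ is a map from $V$ to the power set of $\Delta$, such that the linear maps $s_\alpha:\mathbb{C}V\to\mathbb{C}V$ ($\alpha\in\Delta$) given on basis vectors by $s_\alpha(v)=-v$ if $\alpha\in\tau(v)$ and $s_\alpha(v)=v-\sum_{u\in V,\ \alpha\in\tau(u)} m(u,v)u$ if $\alpha\notin\tau(v)$ define a representation of $W$ on $\mathbb{C}V$. For $B\subseteq\Delta$, $W(B)$ is the subgroup generated by $\{s_\alpha:\alpha\in B\}$, and $Q(B)=\frac{1}{|W(B)|}\sum_{g\in W(B)}g$, $R(B)=\frac{1}{|W(B)|}\sum_{g\in W(B)}\operatorname{sgn}(g)g$, elements of the group algebra $\mathbb{C}[W]$ acting on $\mathbb{C}V$. *)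

(* Defs.v *)
From HB Require Import structures.
From mathcomp Require Import all_boot all_order all_algebra all_fingroup.
From mathcomp Require Import reals complex.
Set Implicit Arguments. Unset Strict Implicit. Unset Printing Implicit Defensive.
Import Order.TTheory GRing.Theory Num.Theory.
Local Open Scope ring_scope.

Definition dotv (R : realType) (k : nat) (u v : 'rV[R]_k) : R :=
  \sum_(i < k) u 0 i * v 0 i.

(* matrix (acting on row vectors by right multiplication) of the reflection
   in the hyperplane orthogonal to a: x |-> x - 2 (x,a)/(a,a) a *)
Definition refl_mx (R : realType) (k : nat) (a : 'rV[R]_k) : 'M[R]_k :=
  1%:M - (2 / dotv a a) *: (a^T *m a).

Definition is_root_system (R : realType) (k : nat) (Phi : seq 'rV[R]_k) : Prop :=
  [/\ uniq Phi, 0 \notin Phi,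
      \rank (\matrix_(i < size Phi) nth 0 Phi i) = k
    & (forall a b, a \in Phi -> b \in Phi -> b *m refl_mx a \in Phi)]
  /\ (forall a (c : R), a \in Phi -> c *: a \in Phi -> c = 1 \/ c = -1)
  /\ (forall a b, a \in Phi -> b \in Phi -> (2 * dotv b a / dotv a a) \is a Num.int).

Definition is_base (R : realType) (k l : nat) (Phi : seq 'rV[R]_k)
    (alpha : 'I_l -> 'rV[R]_k) : Prop :=
  [/\ (forall i, alpha i \in Phi),
      row_free (\matrix_(i < l) alpha i)
    & (forall b, b \in Phi -> exists c : 'I_l -> int,
          b = \sum_(i < l) (c i)%:~R *: alpha i /\
          ((forall i, (0 <= c i)%R) \/ (forall i, (c i <= 0)%R)))].

(* (W, s) is the Weyl group of the root system Phi with base alpha: W is an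
   abstract finite group generated by s i (i in Delta = 'I_l), realized
   faithfully by rho0 as the group of orthogonal maps generated by the simple
   reflections s_{alpha i}. *)
Definition is_weyl_group (R : realType) (k l : nat) (Phi : seq 'rV[R]_k)
    (alpha : 'I_l -> 'rV[R]_k) (gT : finGroupType) (W : {group gT})
    (s : 'I_l -> gT) (rho0 : gT -> 'M[R]_k) : Prop :=
  [/\ is_root_system Phi, is_base Phi alpha,
      W :=: <<[set s i | i : 'I_l]>>%g
    & rho0 1%g = 1%:M]
  /\ [/\
      {in W &, forall x y, rho0 (x * y)%g = rho0 x *m rho0 y},
      {in W &, injective rho0}
    & (forall i, rho0 (s i) = refl_mx (alpha i))].

Definition sgnW (R : realType) (k : nat) (gT : finGroupType)
    (rho0 : gT -> 'M[R]_k) (g : gT) : R[i] := ((\det (rho0 g))%:C)%C.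

(* ---------- weak W-graphs (V = 'I_n, C = R[i]) ---------- *)

(* the operator s_a on CV, as a matrix acting on column vectors:
   column v is s_a(v) expressed in the basis V *)
Definition wg_op (R : realType) (n l : nat) (m : 'I_n -> 'I_n -> R[i])
    (tau : 'I_n -> {set 'I_l}) (a : 'I_l) : 'M[R[i]]_n :=
  \matrix_(u, v) (if a \in tau v then - ((u == v)%:R)
                  else (u == v)%:R - (a \in tau u)%:R * m u v).

(* rho is a representation of W on CV with rho (s a) = wg_op a;
   Gamma = (V, m, tau) is a weak W-graph iff such a rho exists *)
Definition is_wg_rep (R : realType) (n l : nat) (m : 'I_n -> 'I_n -> R[i])
    (tau : 'I_n -> {set 'I_l}) (gT : finGroupType) (W : {group gT})
    (s : 'I_l -> gT) (rho : gT -> 'M[R[i]]_n) : Prop :=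
  [/\ rho 1%g = 1%:M,
      {in W &, forall x y, rho (x * y)%g = rho x *m rho y}
    & forall a, rho (s a) = wg_op m tau a].

Definition parabolic (gT : finGroupType) (l : nat) (s : 'I_l -> gT)
    (B : {set 'I_l}) : {set gT} := <<[set s i | i in B]>>%g.

Definition Qop (R : realType) (n l : nat) (gT : finGroupType) (s : 'I_l -> gT)
    (rho : gT -> 'M[R[i]]_n) (B : {set 'I_l}) : 'M[R[i]]_n :=
  (#|parabolic s B|%:R)^-1 *: \sum_(g in parabolic s B) rho g.

Definition Rop (R : realType) (k n l : nat) (gT : finGroupType) (s : 'I_l -> gT)
    (rho0 : gT -> 'M[R]_k) (rho : gT -> 'M[R[i]]_n) (B : {set 'I_l})
    : 'M[R[i]]_n :=
  (#|parabolic s B|%:R)^-1 *: \sum_(g in parabolic s B) sgnW rho0 g *: rho g.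

(* Main.v *)
Require Import Defs.
From HB Require Import structures.
From mathcomp Require Import all_boot all_order all_algebra all_fingroup.
From mathcomp Require Import reals complex.
From mathcomp Require Import sesquilinear spectral.
Import Order.TTheory GRing.Theory Num.Theory.
Local Open Scope ring_scope.

Section Part0.

Lemma det_1_sub (F : comRingType) k (u v : 'rV[F]_k) :
  \det (1%:M - u^T *m v) = 1 - (v *m u^T) 0 0.
Proof.
pose M := block_mx (1%:M : 'M[F]_1) v u^T (1%:M : 'M[F]_k).
have e1 : M = block_mx 1%:M 0 u^T 1%:M *m block_mx 1%:M v 0 (1%:M - u^T *m v).
  rewrite mulmx_block ?mulmx1 ?mul1mx ?mul0mx ?mulmx0 ?addr0 ?add0r.
  by rewrite addrC subrK.
have e2 : M = block_mx (1%:M - v *m u^T) v 0 1%:M *m block_mx 1%:M 0 u^T 1%:M.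
  rewrite mulmx_block ?mulmx1 ?mul1mx ?mul0mx ?mulmx0 ?addr0 ?add0r.
  by rewrite subrK.
have := congr1 determinant e2; rewrite e1 !det_mulmx !(@det_lblock _ 1 k) !(@det_ublock _ 1 k).
rewrite !det1 !mul1r !mulr1 det_mx11 => ->.
by rewrite !mxE eqxx.
Qed.

Lemma dotv_neq0 (R : realType) k (a : 'rV[R]_k) : a != 0 -> dotv a a != 0.
Proof.
move=> a0; apply/eqP => d0; move/eqP: a0; apply; apply/rowP => i.
have ge0 : forall j : 'I_k, true -> 0 <= a 0 j * a 0 j.
  by move=> j _; rewrite -expr2 sqr_ge0.
have := @psumr_eq0P _ _ _ _ ge0 d0 i isT.
by rewrite mxE => /eqP; rewrite mulf_eq0 orbb => /eqP.
Qed.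

Lemma det_refl (R : realType) k (a : 'rV[R]_k) : a != 0 -> \det (refl_mx a) = -1.
Proof.
move=> a0; rewrite /refl_mx scalemxAl.
have -> : (2 / dotv a a) *: a^T = ((2 / dotv a a) *: a)^T by rewrite linearZ.
rewrite det_1_sub.
rewrite linearZ /= -scalemxAr mxE.
have -> : (a *m a^T) 0 0 = dotv a a.
  by rewrite mxE; apply: eq_bigr => j _; rewrite mxE.
by rewrite divfK ?dotv_neq0 //; rewrite -[2]/(1 + 1) opprD addrA subrr add0r.
Qed.

End Part0.

Section Herm.
Import Num.Def.
Local Open Scope sesquilinear_scope.

Lemma trCM (C : numClosedFieldType) m n p (A : 'M[C]_(m, n)) (B : 'M[C]_(n, p)) :
  (A *m B)^t* = B^t* *m A^t*.
Proof. by rewrite trmx_mul map_mxM. Qed.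

Lemma trC_sum (C : numClosedFieldType) m n (I : finType) (P : pred I)
  (F : I -> 'M[C]_(m, n)) : (\sum_(i | P i) F i)^t* = \sum_(i | P i) (F i)^t*.
Proof. by rewrite raddf_sum map_mx_sum. Qed.

Lemma trCZ (C : numClosedFieldType) m n (a : C) (A : 'M[C]_(m, n)) :
  (a *: A)^t* = conjC a *: A^t*.
Proof. by rewrite linearZ /= map_mxZ. Qed.

Lemma trC1 (C : numClosedFieldType) n : (1%:M : 'M[C]_n)^t* = 1%:M.
Proof. by rewrite trmx1 map_mx1. Qed.

Lemma tr_pos (C : numClosedFieldType) n (X Y : 'M[C]_n) :
  X^t* = X -> Y^t* = Y -> X *m X = X -> Y *m Y = Y -> X *m Y != 0 ->
  \tr (X *m Y) != 0.
Proof.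
move=> hX hY iX iY nz.
have -> : \tr (X *m Y) = \tr ((X *m Y) *m (X *m Y)^t*).
  rewrite trCM hX hY (mulmxA (X *m Y)) -(mulmxA X Y Y) iY [in RHS]mxtrace_mulC.
  by rewrite (mulmxA X X) iX.
apply/negP => /eqP h0; move/negP: nz; apply; apply/eqP/matrixP => i j; rewrite mxE.
set N := X *m Y.
have ge0 : forall a : 'I_n, true -> 0 <= (N *m N^t*) a a.
  move=> a _; rewrite mxE; apply: sumr_ge0 => b _; rewrite !mxE mul_conjC_ge0 //.
have := @psumr_eq0P _ _ _ _ ge0 h0 i isT.
rewrite mxE => h1.
have ge1 : forall b : 'I_n, true -> 0 <= N i b * (N^t*) b i.
  by move=> b _; rewrite !mxE mul_conjC_ge0.
have := @psumr_eq0P _ _ _ _ ge1 h1 j isT.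
by rewrite !mxE => /eqP; rewrite mul_conjC_eq0 => /eqP.
Qed.

Lemma unitarize (C : numClosedFieldType) (gT : finGroupType) (G : {group gT})
  n (rho : gT -> 'M[C]_n) :
  rho 1%g = 1%:M -> {in G &, forall x y, rho (x * y)%g = rho x *m rho y} ->
  exists2 P : 'M[C]_n, P \in unitmx &
    forall g, g \in G ->
      (P *m rho g *m invmx P)^t* = P *m rho (g^-1)%g *m invmx P.
Proof.
move=> rho1 rhoM.
pose H := \sum_(g in G) (rho g)^t* *m rho g.
have Hinv : forall h, h \in G -> (rho h)^t* *m H *m rho h = H.
  move=> h hG; rewrite /H mulmx_sumr mulmx_suml [RHS](reindex_inj (mulIg h)) /=.
  apply: eq_big => [g|g gG]; first by rewrite groupMr.
  by rewrite rhoM // trCM !mulmxA.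
have Hherm : H^t* = H.
  by rewrite /H trC_sum; apply: eq_bigr => g _; rewrite trCM trmxCK.
have Hpos : forall y : 'rV_n, y != 0 -> 0 < (y *m H *m y^t*) 0 0.
  move=> y y0; rewrite /H mulmx_sumr mulmx_suml summxE (bigD1 1%g) ?group1 //=.
  rewrite rho1 trC1 mulmx1 -dotmxE.
  rewrite mulmx1; apply: ltr_wpDr; last exact: dotmx_is_dotmx.
  apply: sumr_ge0 => g _.
  have -> : y *m ((rho g)^t* *m rho g) *m y^t* =
            (y *m (rho g)^t*) *m (y *m (rho g)^t*)^t*.
    by rewrite trCM trmxCK !mulmxA.
  rewrite -dotmxE; exact: dnorm_ge0.
have Hnormal : H \is normalmx by apply/normalmxP; rewrite Hherm.
have HU := orthomx_spectralP Hnormal.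
move: HU; set U := spectralmx H; set d := spectral_diag H => HU.
have Uu : U \is unitarymx := spectral_unitarymx H.
have Ui : invmx U = U^t* := invmx_unitary Uu.
have UU : U *m U^t* = 1%:M by apply/unitarymxP.
have Dd : diag_mx d = U *m H *m U^t*.
  by rewrite HU Ui !mulmxA UU mul1mx -mulmxA UU mulmx1.
have dpos : forall i, 0 < d 0 i.
  move=> i.
  have -> : d 0 i = (row i U *m H *m (row i U)^t*) 0 0.
    have -> : d 0 i = diag_mx d i i by rewrite mxE eqxx mulr1n.
    rewrite Dd !mxE; apply: eq_bigr => k _; rewrite !mxE.
    congr (_ * _); apply: eq_bigr => k' _; rewrite !mxE //.
  apply: Hpos; apply/eqP => r0.
  have : (U *m U^t*) i i = 1 by rewrite UU mxE eqxx.
  have -> : (U *m U^t*) i i = (row i U *m (row i U)^t*) 0 0.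
    by rewrite !mxE; apply: eq_bigr => k _; rewrite !mxE.
  by rewrite r0 mul0mx mxE => /eqP; rewrite eq_sym oner_eq0.
pose sq := \row_i sqrtC (d 0 i).
pose P := diag_mx sq *m U.
have Punit : P \in unitmx.
  rewrite unitmx_mul (unitarymx_unit Uu) andbT unitmxE det_diag unitfE.
  apply/prodf_neq0 => i _; rewrite mxE sqrtC_eq0; exact: lt0r_neq0.
have sqC : (diag_mx sq)^t* = diag_mx sq.
  apply/matrixP => i j; rewrite !mxE; case: (eqVneq j i) => [->|ji].
    by rewrite !mulr1n geC0_conj // sqrtC_ge0 ltW.
  by rewrite !mulr0n rmorph0.
have PP : P^t* *m P = H.
  rewrite /P trCM sqC mulmxA -(mulmxA _ (diag_mx sq) (diag_mx sq)) mulmx_diag.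
  have -> : \row_j (sq 0 j * sq 0 j) = d.
    by apply/rowP => j; rewrite !mxE -expr2 sqrtCK.
  by rewrite -Ui -HU.
clearbody P; exists P => // g gG.
pose Pi := invmx P.
have PPi : P *m Pi = 1%:M by apply: mulmxV.
have PiP : Pi *m P = 1%:M by apply: mulVmx.
have PiC : Pi^t* *m P^t* = 1%:M by rewrite -trCM PPi trC1.
have unit1 : (P *m rho g *m Pi)^t* *m (P *m rho g *m Pi) = 1%:M.
  rewrite !trCM !mulmxA -(mulmxA _ (P^t*) P) PP.
  rewrite -(mulmxA (Pi^t*) _ H) -(mulmxA (Pi^t*) _ (rho g)) Hinv //.
  by rewrite -PP !mulmxA PiC mul1mx PPi.
have inv1 : (P *m rho g *m Pi) *m (P *m rho (g^-1)%g *m Pi) = 1%:M.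
  rewrite !mulmxA -(mulmxA _ Pi P) PiP mulmx1 -(mulmxA P) -rhoM ?groupV //.
  by rewrite mulgV rho1 mulmx1 PPi.
by rewrite -[LHS]mulmx1 -inv1 mulmxA unit1 mul1mx.
Qed.

Section Avg.
Variables (C : numClosedFieldType) (gT : finGroupType) (G B : {group gT}) (n : nat).
Variable rho : gT -> 'M[C]_n.
Hypothesis rhoM : {in G &, forall x y, rho (x * y)%g = rho x *m rho y}.
Hypothesis sBG : B \subset G.
Variable chi : gT -> C.
Hypothesis chiM : {in B &, forall x y, chi (x * y)%g = chi x * chi y}.
Hypothesis chi2 : {in B, forall x, chi x * chi x = 1}.

Definition Eav : 'M[C]_n := (#|B|%:R)^-1 *: \sum_(g in B) chi g *: rho g.

Lemma Eav_r h : h \in B -> Eav *m rho h = chi h *: Eav.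
Proof.
move=> hB; rewrite /Eav -scalemxAl mulmx_suml scalerA mulrC -scalerA; congr (_ *: _).
rewrite scaler_sumr [RHS](reindex_inj (mulIg h)) /=.
apply: eq_big => [g|g gB]; first by rewrite groupMr.
rewrite -scalemxAl -rhoM ?(subsetP sBG) // scalerA chiM // mulrCA chi2 // mulr1.
done.
Qed.

Lemma Eav_l h : h \in B -> rho h *m Eav = chi h *: Eav.
Proof.
move=> hB; rewrite /Eav -scalemxAr mulmx_sumr scalerA mulrC -scalerA; congr (_ *: _).
rewrite scaler_sumr [RHS](reindex_inj (mulgI h)) /=.
apply: eq_big => [g|g gB]; first by rewrite groupMl.
rewrite -scalemxAr -rhoM ?(subsetP sBG) // scalerA chiM // mulrA chi2 // mul1r.
done.
Qed.

Lemma Eav_idem : Eav *m Eav = Eav.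
Proof.
rewrite {2}/Eav -scalemxAr mulmx_sumr.
under eq_bigr => g gB do rewrite -scalemxAr Eav_r // scalerA chi2 // scale1r.
rewrite sumr_const -scaler_nat scalerA mulVf ?scale1r //.
by rewrite pnatr_eq0 -lt0n cardG_gt0.
Qed.

Lemma Eav_herm (P : 'M[C]_n) :
  P \in unitmx ->
  (forall g, g \in G -> (P *m rho g *m invmx P)^t* = P *m rho (g^-1)%g *m invmx P) ->
  {in B, forall g, chi (g^-1)%g = chi g} -> {in B, forall g, conjC (chi g) = chi g} ->
  (P *m Eav *m invmx P)^t* = P *m Eav *m invmx P.
Proof.
move=> Pu Psig chiV chiC.
have lin : P *m Eav *m invmx P =
    (#|B|%:R)^-1 *: \sum_(g in B) chi g *: (P *m rho g *m invmx P).
  rewrite /Eav -scalemxAr -scalemxAl mulmx_sumr mulmx_suml; congr (_ *: _).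
  by apply: eq_bigr => g _; rewrite -scalemxAr -scalemxAl.
rewrite lin trCZ trC_sum fmorphV rmorph_nat; congr (_ *: _).
under eq_bigr => g gB do rewrite trCZ chiC // Psig ?(subsetP sBG) //.
rewrite (reindex_inj invg_inj) /=; apply: eq_big => [g|g gB]; first by rewrite groupV.
by rewrite invgK -chiV // invgK.
Qed.

End Avg.

End Herm.

Section Main.
Import Num.Def.
Variables (R : realType) (k l : nat) (gT : finGroupType) (W : {group gT}).
Variables (s : 'I_l -> gT) (rho0 : gT -> 'M[R]_k) (n : nat).
Variables (m : 'I_n -> 'I_n -> R[i]) (tau : 'I_n -> {set 'I_l}).
Variable (rho : gT -> 'M[R[i]]_n).
Hypothesis HsW : forall i, s i \in W.
Hypothesis Hr0M : {in W &, forall x y, rho0 (x * y)%g = rho0 x *m rho0 y}.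
Hypothesis Hr01 : rho0 1%g = 1%:M.
Hypothesis Hdet : forall i, \det (rho0 (s i)) = -1.
Hypothesis Hr1 : rho 1%g = 1%:M.
Hypothesis HrM : {in W &, forall x y, rho (x * y)%g = rho x *m rho y}.
Hypothesis Hrs : forall a, rho (s a) = wg_op m tau a.

Local Notation sg := (sgnW rho0).
Implicit Types B : {set 'I_l}.

Definition parG (B : {set 'I_l}) : {group gT} := (<<[set s i | i in B]>>)%G.

Lemma parab_sub B : parG B \subset W.
Proof. by rewrite gen_subG; apply/subsetP => x /imsetP [i _ ->]; exact: HsW. Qed.

Lemma s_par (B : {set 'I_l}) i : i \in B -> s i \in parG B.
Proof. by move=> iB; apply: mem_gen; apply: imset_f. Qed.

Lemma par_ind B (Pr : gT -> Prop) : Pr 1%g ->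
  (forall i y, i \in B -> y \in parG B -> Pr y -> Pr (s i * y)%g) ->
  forall g, g \in parG B -> Pr g.
Proof.
move=> P1 PS g /gen_prodgP [k' [c Hc ->]].
elim: k' c Hc => [|k' IH] c Hc; first by rewrite big_ord0.
rewrite big_ord_recl; have /imsetP [i iB ->] := Hc ord0.
apply: PS => //; last by apply: IH => j; exact: Hc.
by apply: group_prod => j _; apply: mem_gen; exact: Hc.
Qed.

Lemma sgM x y : x \in W -> y \in W -> sg (x * y)%g = sg x * sg y.
Proof. by move=> xW yW; rewrite /sgnW Hr0M // det_mulmx rmorphM. Qed.

Lemma sg1 : sg 1%g = 1.
Proof. by rewrite /sgnW Hr01 det1 rmorph1. Qed.

Lemma sg_s i : sg (s i) = -1.
Proof. by rewrite /sgnW Hdet rmorphN1. Qed.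

Lemma sg_pm B g : g \in parG B -> sg g = 1 \/ sg g = -1.
Proof.
move: g; apply: (@par_ind B (fun g => sg g = 1 \/ sg g = -1)); first by left; exact: sg1.
move=> i y iB yB IH; rewrite sgM ?HsW ?(subsetP (parab_sub B)) // sg_s.
by case: IH => ->; [right; rewrite mulr1 | left; rewrite mulrNN mulr1].
Qed.

Lemma sg2 B : {in parG B, forall g, sg g * sg g = 1}.
Proof. by move=> g /sg_pm [] ->; rewrite ?mulr1 ?mulrNN ?mulr1. Qed.

Lemma sgV B : {in parG B, forall g, sg (g^-1)%g = sg g}.
Proof.
move=> g gB.
have h : sg (g^-1)%g * sg g = 1.
  by rewrite -sgM ?groupV ?(subsetP (parab_sub B)) // mulVg sg1.
by rewrite -[sg (g^-1)%g]mulr1 -(@sg2 B g gB) mulrA h mul1r.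
Qed.

Lemma sgC B : {in parG B, forall g, conjC (sg g) = sg g}.
Proof. by move=> g /sg_pm [] ->; rewrite ?rmorph1 ?rmorphN1. Qed.

Lemma sgMB B : {in parG B &, forall x y, sg (x * y)%g = sg x * sg y}.
Proof. by move=> x y xB yB; rewrite sgM ?(subsetP (parab_sub B)). Qed.

Lemma wg_row a u w : a \notin tau u -> wg_op m tau a u w = (u == w)%:R.
Proof.
move=> au; rewrite mxE; case: ifP => [aw|_].
  by case: (eqVneq u w) => [uw|//]; [rewrite uw aw in au | rewrite oppr0].
by rewrite (negbTE au) mul0r subr0.
Qed.

Lemma wg_col a u w : a \in tau u -> wg_op m tau a w u = - (w == u)%:R.
Proof. by move=> au; rewrite mxE au. Qed.

Lemma row_fix v B : (forall i, i \in B -> i \notin tau v) ->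
  forall g, g \in parG B -> forall u, rho g v u = (v == u)%:R.
Proof.
move=> HB; apply: (@par_ind B (fun g => forall u, rho g v u = (v == u)%:R)) => [|i y iB yB IH] u; first by rewrite Hr1 mxE.
rewrite HrM ?HsW ?(subsetP (parab_sub B)) // Hrs mxE (bigD1 v) //=.
rewrite wg_row ?HB // eqxx mul1r IH big1 ?addr0 // => w wv.
by rewrite wg_row ?HB // eq_sym (negbTE wv) mul0r.
Qed.

Lemma col_sgn v B : (forall i, i \in B -> i \in tau v) ->
  forall g, g \in parG B -> forall u, rho g u v = sg g * (u == v)%:R.
Proof.
move=> HB; apply: (@par_ind B (fun g => forall u, rho g u v = sg g * (u == v)%:R)) => [|i y iB yB IH] u; first by rewrite Hr1 mxE sg1 mul1r.
rewrite HrM ?HsW ?(subsetP (parab_sub B)) // Hrs mxE (bigD1 v) //=.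
rewrite wg_col ?HB // IH eqxx mulr1 big1 ?addr0.
  by rewrite sgM ?HsW ?(subsetP (parab_sub B)) // sg_s mulN1r !mulNr mulrC.
by move=> w wv; rewrite IH (negbTE wv) mulr0 mulr0.
Qed.


Variable A : {set 'I_l}.

Lemma QE : Qop s rho (~: A) = Eav _ _ (parG (~: A)) _ rho (fun _ => 1).
Proof. by rewrite /Qop /Eav; congr (_ *: _); apply: eq_bigr => g _; rewrite scale1r. Qed.

Lemma RE : Rop s rho0 rho A = Eav _ _ (parG A) _ rho sg.
Proof. by []. Qed.

Lemma one_M B : {in parG B &, forall x y : gT, (fun _ => 1 : R[i]) (x * y)%g = 1 * 1}.
Proof. by move=> x y _ _; rewrite mulr1. Qed.

Lemma one_2 B : {in parG B, forall x : gT, (fun _ => 1 : R[i]) x * 1 = 1}.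
Proof. by move=> x _; rewrite mulr1. Qed.

Lemma Q_r h : h \in parG (~: A) -> Qop s rho (~: A) *m rho h = Qop s rho (~: A).
Proof.
move=> hB; rewrite QE (Eav_r _ _ _ _ _ _ HrM (parab_sub _) _ (@one_M _) (@one_2 _) _ hB) scale1r //.
Qed.

Lemma R_l h : h \in parG A -> rho h *m Rop s rho0 rho A = sg h *: Rop s rho0 rho A.
Proof.
move=> hB; rewrite RE (Eav_l _ _ _ _ _ _ HrM (parab_sub _) _ (@sgMB _) (@sg2 _) _ hB) //.
Qed.

Lemma xx0 (x : R[i]) : x = - x -> x = 0.
Proof.
move=> h; apply/eqP; move/eqP: h; rewrite -addr_eq0 -mulr2n mulrn_eq0 //.
Qed.

Lemma not1_QR0 : ~ (exists v, tau v = A) ->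
  Qop s rho (~: A) *m Rop s rho0 rho A = 0.
Proof.
move=> Hn; apply/matrixP => i j; rewrite !mxE big1 // => u _.
case: (boolP (A \subset tau u)) => [sub | nsub].
  have [b bt bA] : exists2 b, b \in tau u & b \notin A.
    have : tau u != A by apply/eqP => e; apply: Hn; exists u.
    by rewrite eqEsubset sub andbT => /subsetPn [b bt bA]; exists b.
  have QuZ : Qop s rho (~: A) i u = 0.
    have bA' : b \in ~: A by rewrite inE bA.
    have e' := Q_r _ (s_par (~: A) b bA').
    apply: xx0; rewrite -{1}e' mxE Hrs (bigD1 u) //= wg_col // eqxx big1 ?addr0.
      by rewrite mulrN1.
    by move=> w wu; rewrite wg_col // (negbTE wu) oppr0 mulr0.
  by rewrite QuZ mul0r.
have [a aA at'] : exists2 a, a \in A & a \notin tau u by move/subsetPn: nsub.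
have RuZ : Rop s rho0 rho A u j = 0.
  have e := R_l _ (s_par A a aA).
  apply: xx0.
  have : (rho (s a) *m Rop s rho0 rho A) u j = - Rop s rho0 rho A u j.
    by rewrite e sg_s scaleN1r mxE.
  rewrite mxE Hrs (bigD1 u) //= wg_row // eqxx mul1r big1 ?addr0 //.
  by move=> w wu; rewrite wg_row // eq_sym (negbTE wu) mul0r.
by rewrite RuZ mulr0.
Qed.

Lemma yes1_QR v : tau v = A -> Qop s rho (~: A) *m Rop s rho0 rho A != 0.
Proof.
move=> tv.
have nz B : (#|parG B|%:R : R[i]) != 0 by rewrite pnatr_eq0 -lt0n cardG_gt0.
have Qv u : Qop s rho (~: A) v u = (v == u)%:R.
  rewrite /Qop mxE summxE.
  rewrite (eq_bigr (fun _ => (v == u)%:R)); last first.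
    move=> g gB; apply: (row_fix v (~: A)) => // i; rewrite inE tv //.
  by rewrite sumr_const -[(v == u)%:R *+ _]mulr_natr mulrCA mulVf ?mulr1 // nz.
have Rv u : Rop s rho0 rho A u v = (u == v)%:R.
  rewrite /Rop mxE summxE.
  rewrite (eq_bigr (fun _ => (u == v)%:R)); last first.
    move=> g gB; rewrite mxE (col_sgn v A) ?tv // mulrA (@sg2 A g gB) mul1r //.
  by rewrite sumr_const -[(u == v)%:R *+ _]mulr_natr mulrCA mulVf ?mulr1 // nz.
apply/eqP => h; move/matrixP: h => /(_ v v); rewrite !mxE (bigD1 v) //=.
rewrite Qv Rv eqxx mul1r big1 ?addr0.
  by move/eqP; rewrite oner_eq0.
by move=> u uv; rewrite Qv eq_sym (negbTE uv) mul0r.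
Qed.


Local Open Scope sesquilinear_scope.

Lemma Q_idem : Qop s rho (~: A) *m Qop s rho (~: A) = Qop s rho (~: A).
Proof. by rewrite QE (Eav_idem _ _ _ _ _ _ HrM (parab_sub _) _ (@one_M _) (@one_2 _)). Qed.

Lemma R_idem : Rop s rho0 rho A *m Rop s rho0 rho A = Rop s rho0 rho A.
Proof. by rewrite RE (Eav_idem _ _ _ _ _ _ HrM (parab_sub _) _ (@sgMB _) (@sg2 _)). Qed.

Lemma QR_tr : Qop s rho (~: A) *m Rop s rho0 rho A != 0 ->
  \tr (Qop s rho (~: A) *m Rop s rho0 rho A) != 0.
Proof.
move=> nz.
have [P Pu Psig] := unitarize _ _ W _ rho Hr1 HrM.
have PiP : invmx P *m P = 1%:M by apply: mulVmx.
have PPi : P *m invmx P = 1%:M by apply: mulmxV.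
have hX : (P *m Qop s rho (~: A) *m invmx P)^t* = P *m Qop s rho (~: A) *m invmx P.
  rewrite QE; apply: (Eav_herm _ _ _ _ _ _ (parab_sub _) _ P Pu Psig) => g _ //.
  by rewrite rmorph1.
have hY : (P *m Rop s rho0 rho A *m invmx P)^t* = P *m Rop s rho0 rho A *m invmx P.
  rewrite RE; apply: (Eav_herm _ _ _ _ _ _ (parab_sub _) _ P Pu Psig).
    exact: sgV.
  exact: sgC.
have idem (X : 'M[R[i]]_n) : X *m X = X ->
    (P *m X *m invmx P) *m (P *m X *m invmx P) = P *m X *m invmx P.
  move=> iX; rewrite !mulmxA -(mulmxA _ (invmx P) P) PiP mulmx1.
  by rewrite -(mulmxA P X X) iX.
have prod : (P *m Qop s rho (~: A) *m invmx P) *m (P *m Rop s rho0 rho A *m invmx P)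
    = P *m (Qop s rho (~: A) *m Rop s rho0 rho A) *m invmx P.
  by rewrite !mulmxA -(mulmxA _ (invmx P) P) PiP mulmx1.
have -> : \tr (Qop s rho (~: A) *m Rop s rho0 rho A) =
    \tr ((P *m Qop s rho (~: A) *m invmx P) *m (P *m Rop s rho0 rho A *m invmx P)).
  by rewrite prod [RHS]mxtrace_mulC mulmxA PiP mul1mx.
apply: (tr_pos _ _ _ _ hX hY (idem _ Q_idem) (idem _ R_idem)).
rewrite prod; apply/eqP => h0; move/eqP: nz; apply.
have -> : Qop s rho (~: A) *m Rop s rho0 rho A =
   invmx P *m (P *m (Qop s rho (~: A) *m Rop s rho0 rho A) *m invmx P) *m P.
  by rewrite !mulmxA PiP mul1mx -mulmxA PiP mulmx1.
by rewrite h0 mulmx0 mul0mx.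
Qed.

Lemma main_tfae :
  [<-> exists v : 'I_n, tau v = A;
       Qop s rho (~: A) *m Rop s rho0 rho A != 0;
       \tr (Qop s rho (~: A) *m Rop s rho0 rho A) != 0;
       \tr (Rop s rho0 rho A *m Qop s rho (~: A)) != 0].
Proof.
tfae.
- by move=> [v tv]; apply: (yes1_QR v tv).
- exact: QR_tr.
- by rewrite mxtrace_mulC.
- move=> htr; case: (boolP [exists v, tau v == A]) => [/existsP [v /eqP tv]| nex].
    by exists v.
  exfalso; move: htr; rewrite mxtrace_mulC not1_QR0 ?mxtrace0 ?eqxx //.
  by move=> [v tv]; move/existsP: nex; apply; exists v; rewrite tv.
Qed.

End Main.


Theorem theorem2p10 (R : realType) (k l : nat) (Phi : seq 'rV[R]_k)
    (alpha : 'I_l -> 'rV[R]_k) (gT : finGroupType) (W : {group gT})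
    (s : 'I_l -> gT) (rho0 : gT -> 'M[R]_k)
    (n : nat) (m : 'I_n -> 'I_n -> R[i]) (tau : 'I_n -> {set 'I_l})
    (rho : gT -> 'M[R[i]]_n) (A : {set 'I_l}) :
  is_weyl_group Phi alpha W s rho0 ->
  is_wg_rep m tau W s rho ->
  [<-> exists v : 'I_n, tau v = A;
       Qop s rho (~: A) *m Rop s rho0 rho A != 0;
       \tr (Qop s rho (~: A) *m Rop s rho0 rho A) != 0;
       \tr (Rop s rho0 rho A *m Qop s rho (~: A)) != 0].
Proof.
move=> [[HPhi Hbase HW Hr01] [Hr0M _ Hs]] [Hr1 HrM Hrs].
have HsW : forall i, s i \in W.
  by move=> i; rewrite HW; apply: mem_gen; apply/imsetP; exists i.
have Hdet : forall i, \det (rho0 (s i)) = -1.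
  move=> i; rewrite Hs det_refl //.
  case: HPhi => [[_ H0 _ _] _]; case: Hbase => Hin _ _.
  apply/eqP => a0; move: (Hin i); rewrite a0 => h.
  by rewrite h in H0.
exact: (main_tfae _ _ _ _ _ _ _ _ _ _ _ HsW Hr0M Hr01 Hdet Hr1 HrM Hrs A).
Qed.
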